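(* Let $\mathcal{F}$ be a class of simple graphs and consider the assertions: (1) $\mathcal{F}$ is closed under taking induced subgraphs; (2) $\equiv_{\mathcal{F}}$ is preserved under left lexicographic products, i.e.\ for all simple graphs $G,H,H'$, if $H\equiv_{\mathcal{F}}H'$ then $G\cdot H\equiv_{\mathcal{F}}G\cdot H'$; (3) $\mathrm{cl}(\mathcal{F})$ is closed under taking induced subgraphs. Then (1) implies (2), and (2) and (3) are equivalent.
   Context: All graphs are finite, undirected, without multiple edges; simple means without loops. $\hom(F,G)$ counts homomorphisms $F\to G$; $G\equiv_{\mathcal{F}}H$ means $\hom(F,G)=\hom(F,H)$ for all $F\in\mathcal{F}$; $\mathrm{cl}(\mathcal{F})$ is the class of all simple graphs $K$ such that for all simple $G,H$, $G\equiv_{\mathcal{F}}H$ implies $\hom(K,G)=\hom(K,H)$. The lexicographic product $G\cdot H$ has vertex set $V(G)\times V(H)$, with $(g,h)$ adjacent to $(g',h')$ iff either $g=g'$ and $hh'\in E(H)$, or $gg'\in E(G)$. *)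

(* Defs.v *)
From mathcomp Require Import all_boot.
Set Implicit Arguments. Unset Strict Implicit. Unset Printing Implicit Defensive.

Record sgraph := SGraph {
  vert :> finType;
  adj : rel vert;
  adj_sym : symmetric adj;
  adj_irr : irreflexive adj }.

Definition hom (F G : sgraph) : nat :=
  #|[set f : {ffun F -> G} | [forall x : F, forall y : F, adj x y ==> adj (f x) (f y)]]|.

Definition hom_equiv (C : sgraph -> Prop) (G H : sgraph) : Prop :=
  forall F, C F -> hom F G = hom F H.

Definition cl (C : sgraph -> Prop) (K : sgraph) : Prop :=
  forall G H : sgraph, hom_equiv C G H -> hom K G = hom K H.

Definition iso (G H : sgraph) : Prop :=
  exists f : G -> H, bijective f /\ forall x y : G, adj (f x) (f y) = adj x y.

Section Induced.
Variables (G : sgraph) (S : {set G}).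
Definition ind_vert : finType := {x : G | x \in S}.
Definition ind_adj : rel ind_vert := fun x y => adj (val x) (val y).
Lemma ind_adj_sym : symmetric ind_adj.
Proof. by move=> x y; rewrite /ind_adj adj_sym. Qed.
Lemma ind_adj_irr : irreflexive ind_adj.
Proof. by move=> x; rewrite /ind_adj adj_irr. Qed.
Definition induced : sgraph := SGraph ind_adj_sym ind_adj_irr.
End Induced.

Definition induced_closed (C : sgraph -> Prop) : Prop :=
  forall F : sgraph, C F -> forall (S : {set F}) (K : sgraph), iso K (induced S) -> C K.

Section Lex.
Variables (G H : sgraph).
Definition lex_adj : rel (G * H)%type :=
  fun u v => ((u.1 == v.1) && adj u.2 v.2) || adj u.1 v.1.
Lemma lex_adj_sym : symmetric lex_adj.
Proof. by move=> [g h] [g' h']; rewrite /lex_adj /= eq_sym adj_sym (adj_sym g). Qed.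
Lemma lex_adj_irr : irreflexive lex_adj.
Proof. by move=> [g h]; rewrite /lex_adj /= !adj_irr andbF. Qed.
Definition lexprod : sgraph := SGraph lex_adj_sym lex_adj_irr.
End Lex.

Definition lex_preserved (C : sgraph -> Prop) : Prop :=
  forall G H H' : sgraph, hom_equiv C H H' -> hom_equiv C (lexprod G H) (lexprod G H').

(* Main.v *)
Require Import Defs.
From mathcomp Require Import all_boot.
Set Implicit Arguments. Unset Strict Implicit. Unset Printing Implicit Defensive.

Section Cnt.
Variable F : sgraph.

Definition cnt (Y : sgraph) (R : rel F) : nat :=
  #|[set f : {ffun F -> Y} | [forall x, forall y, R x y ==> adj (f x) (f y)]]|.

Definition cntsub (T : {set F}) (Y : sgraph) (R : rel F) : nat :=
  #|[set p : {ffun ind_vert T -> Y} |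
     [forall x, forall y, R (val x) (val y) ==> adj (p x) (p y)]]|.

Lemma hom_cnt Y : hom F Y = cnt Y (@adj F).
Proof. by []. Qed.

Lemma cnt_ext Y R1 R2 : R1 =2 R2 -> cnt Y R1 = cnt Y R2.
Proof.
move=> e; rewrite /cnt; apply: eq_card => f; rewrite !inE.
by apply: eq_forallb => x; apply: eq_forallb => y; rewrite e.
Qed.

Lemma cnt_false Y : cnt Y (fun _ _ => false) = #|Y| ^ #|F|.
Proof.
rewrite /cnt -card_ffun; apply: eq_card => f; rewrite !inE.
by apply/forallP => x; apply/forallP.
Qed.

Lemma cnt_le Y R : cnt Y R <= #|Y| ^ #|F|.
Proof. by rewrite -card_ffun /cnt max_card. Qed.

Variables (T : {set F}) (Y : sgraph).

Definition resT (f : {ffun F -> Y}) : {ffun ind_vert T -> Y} :=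
  [ffun u : ind_vert T => f (val u)].
Definition resC (f : {ffun F -> Y}) : {ffun ind_vert (~: T) -> Y} :=
  [ffun u : ind_vert (~: T) => f (val u)].

Definition glue (p : {ffun ind_vert T -> Y}) (q : {ffun ind_vert (~: T) -> Y}) :
  {ffun F -> Y} :=
  [ffun x => (if x \in T as b return (x \in T) = b -> Y
              then fun h => p (exist _ x h)
              else fun h => q (exist _ x (etrans (in_setC x T) (negbT h)))) (erefl _)].

Lemma glueK f : glue (resT f) (resC f) = f.
Proof. by apply/ffunP => x; rewrite !ffunE; move: (erefl (x \in T)); case: {2 3}(x \in T) => h; rewrite ffunE. Qed.

Lemma resT_glue p q : resT (glue p q) = p.
Proof.
apply/ffunP => -[x hx]; rewrite !ffunE /=; move: (erefl (x \in T)).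
case: {2 3}(x \in T) => h.
  by congr (p _); apply: val_inj.
by exfalso; move: hx; rewrite h.
Qed.

Lemma resC_glue p q : resC (glue p q) = q.
Proof.
apply/ffunP => -[x hx]; rewrite !ffunE /=; move: (erefl (x \in T)).
case: {2 3}(x \in T) => h.
  by exfalso; move: hx; rewrite inE h.
by congr (q _); apply: val_inj.
Qed.

Lemma cond_split (R : rel F) (f : {ffun F -> Y}) :
  (forall x y, R x y -> (x \in T) = (y \in T)) ->
  [forall x, forall y, R x y ==> adj (f x) (f y)] =
  [forall x, forall y, R (val x) (val y) ==> adj (resT f x) (resT f y)] &&
  [forall x, forall y, R (val x) (val y) ==> adj (resC f x) (resC f y)].
Proof.
move=> hR; apply/idP/idP.
  move=> /forallP H; apply/andP; split; apply/forallP => u; apply/forallP => v;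
    rewrite !ffunE; exact: (forallP (H (val u)) (val v)).
case/andP => /forallP H1 /forallP H2; apply/forallP => x; apply/forallP => y.
apply/implyP => rxy.
case: (boolP (x \in T)) => hx.
  have hy : y \in T by rewrite -(hR _ _ rxy).
  move: (forallP (H1 (exist _ x hx)) (exist _ y hy)); rewrite !ffunE /=.
  by move/implyP; apply.
have hx' : x \in ~: T by rewrite inE.
have hy : y \in ~: T by rewrite inE -(hR _ _ rxy).
move: (forallP (H2 (exist _ x hx')) (exist _ y hy)); rewrite !ffunE /=.
by move/implyP; apply.
Qed.

Lemma cnt_split (R : rel F) : (forall x y, R x y -> (x \in T) = (y \in T)) ->
  cnt Y R = cntsub T Y R * cntsub (~: T) Y R.
Proof.
move=> hR.
rewrite /cnt /cntsub -!sum1dep_card.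
rewrite (reindex (fun pq => glue pq.1 pq.2)) /=; last first.
  exists (fun f => (resT f, resC f)) => [[p q] _|f _] /=.
    by rewrite resT_glue resC_glue.
  by rewrite glueK.
rewrite big_distrlr /=.
rewrite (pair_big (fun p : {ffun ind_vert T -> Y} =>
     [forall x, forall y, R (val x) (val y) ==> adj (p x) (p y)])
   (fun q : {ffun ind_vert (~: T) -> Y} =>
     [forall x, forall y, R (val x) (val y) ==> adj (q x) (q y)])
   (fun _ _ => 1)) /=.
apply: eq_bigl => -[p q] /=.
by rewrite cond_split // resT_glue resC_glue.
Qed.

End Cnt.

Lemma card_sum (T : finType) (P : pred T) : #|[set x | P x]| = \sum_x (P x : nat).
Proof. by rewrite -sum1dep_card big_mkcond; apply: eq_bigr => x _; case: (P x). Qed.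

Section Pair.
Variables (F : sgraph) (A B : finType).
Definition pairf (p : {ffun F -> A} * {ffun F -> B}) : {ffun F -> A * B} :=
  [ffun x => (p.1 x, p.2 x)].
Definition unpair (f : {ffun F -> A * B}) : {ffun F -> A} * {ffun F -> B} :=
  ([ffun x => (f x).1], [ffun x => (f x).2]).
Lemma pairf_bij : bijective pairf.
Proof.
exists unpair => [[p q]|f].
  by rewrite /unpair /pairf; congr pair; apply/ffunP => x; rewrite !ffunE.
by apply/ffunP => x; rewrite !ffunE; case: (f x).
Qed.

Lemma sum_pairf (G : {ffun F -> A * B} -> nat) :
  \sum_f G f = \sum_(p : {ffun F -> A}) \sum_(q : {ffun F -> B}) G (pairf (p, q)).
Proof.
rewrite (reindex pairf) /=; last by apply: onW_bij; exact: pairf_bij.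
by rewrite pair_big /=; apply: eq_bigr => -[p q].
Qed.
End Pair.

Definition gprod_adj (G X : sgraph) : rel (G * X)%type :=
  fun u v => adj u.1 v.1 && adj u.2 v.2.
Lemma gprod_adj_sym G X : symmetric (@gprod_adj G X).
Proof. by move=> u v; rewrite /gprod_adj adj_sym (adj_sym u.2). Qed.
Lemma gprod_adj_irr G X : irreflexive (@gprod_adj G X).
Proof. by move=> u; rewrite /gprod_adj adj_irr. Qed.
Definition gprod G X : sgraph := SGraph (@gprod_adj_sym G X) (@gprod_adj_irr G X).

Lemma cnt_prod (F G X : sgraph) (R : rel F) :
  cnt (gprod G X) R = cnt G R * cnt X R.
Proof.
rewrite /cnt !card_sum (sum_pairf (A := G) (B := X)) big_distrlr /=.
apply: eq_bigr => p _; apply: eq_bigr => q _.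
set c1 := [forall x, _]; set c2 := [forall x, _]; set c3 := [forall x, _].
suff -> : c1 = c2 && c3 by case: c2; case: c3.
rewrite /c1 /c2 /c3; apply/idP/idP.
  move=> /forallP H; apply/andP; split; apply/forallP => x; apply/forallP => y;
    apply/implyP => r; move: (implyP (forallP (H x) y) r); rewrite !ffunE /gprod_adj /=;
    by case/andP.
case/andP => /forallP H1 /forallP H2; apply/forallP => x; apply/forallP => y.
apply/implyP => r; rewrite !ffunE /= /gprod_adj /=.
by rewrite (implyP (forallP (H1 x) y) r) (implyP (forallP (H2 x) y) r).
Qed.

Definition validm (F A : sgraph) (phi : {ffun F -> A}) : bool :=
  [forall x, forall y, adj x y ==> (phi x == phi y) || adj (phi x) (phi y)].
Definition Rphi (F : sgraph) (A : finType) (phi : {ffun F -> A}) : rel F :=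
  fun x y => adj x y && (phi x == phi y).

Lemma hom_lex (F A Y : sgraph) :
  hom F (lexprod A Y) = \sum_(phi : {ffun F -> A}) validm phi * cnt Y (Rphi phi).
Proof.
rewrite hom_cnt /cnt card_sum (sum_pairf (A := A) (B := Y)) /=.
apply: eq_bigr => p _.
rewrite card_sum big_distrr /=.
apply: eq_bigr => q _.
set c1 := [forall x, _]; set c3 := [forall x, _].
suff -> : c1 = validm p && c3 by case: validm; case: c3.
rewrite /c1 /c3 /validm; apply/idP/idP.
  move=> /forallP H; apply/andP; split; apply/forallP => x; apply/forallP => y;
    apply/implyP => r.
    move: (implyP (forallP (H x) y) r); rewrite !ffunE /lex_adj /=.
    by case/orP => [/andP[->]|->] //; rewrite orbT.
  move: r; rewrite /Rphi => /andP[r e].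
  move: (implyP (forallP (H x) y) r); rewrite !ffunE /lex_adj /= e /=.
  by rewrite (eqP e) adj_irr orbF.
case/andP => /forallP H1 /forallP H2; apply/forallP => x; apply/forallP => y.
apply/implyP => r; rewrite !ffunE /lex_adj /=.
case/orP: (implyP (forallP (H1 x) y) r) => [e|->]; last by rewrite orbT.
by rewrite e (implyP (forallP (H2 x) y)) // /Rphi r e.
Qed.

Section Fiber.
Variables (F : sgraph).

Lemma hom_cntsub (T : {set F}) Y : hom (induced T) Y = cntsub T Y (@adj F).
Proof. by []. Qed.

Lemma cntsub_ext (T : {set F}) Y (R1 R2 : rel F) :
  (forall u v : ind_vert T, R1 (val u) (val v) = R2 (val u) (val v)) ->
  cntsub T Y R1 = cntsub T Y R2.
Proof.
move=> e; rewrite /cntsub; apply: eq_card => f; rewrite !inE.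
by apply: eq_forallb => x; apply: eq_forallb => y; rewrite e.
Qed.

Lemma cntsub_false (T : {set F}) Y (R : rel F) :
  (forall u v : ind_vert T, R (val u) (val v) = false) ->
  cntsub T Y R = #|Y| ^ #|ind_vert T|.
Proof.
move=> e; rewrite /cntsub -card_ffun; apply: eq_card => f; rewrite !inE.
by apply/forallP => x; apply/forallP => y; rewrite e.
Qed.

Lemma cntsub_le (T : {set F}) Y (R : rel F) : cntsub T Y R <= #|Y| ^ #|ind_vert T|.
Proof. by rewrite -card_ffun /cntsub max_card. Qed.

Lemma card_single (v : F) Y : hom (induced [set v]) Y = #|Y| ^ #|ind_vert [set v]|.
Proof.
rewrite hom_cntsub; apply: cntsub_false => -[x hx] [y hy] /=.
by move: hx hy; rewrite !inE => /eqP -> /eqP ->; rewrite adj_irr.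
Qed.

Lemma card_eq_of (H H' : sgraph) :
  (forall T : {set F}, hom (induced T) H = hom (induced T) H') ->
  0 < #|F| -> #|H| = #|H'|.
Proof.
move=> hT /card_gt0P [v _].
have := hT [set v]; rewrite !card_single => /eqP.
rewrite eqn_exp2r; first by move/eqP.
by apply/card_gt0P; exists (exist _ v (set11 v)).
Qed.

Variables (A : finType) (phi : {ffun F -> A}).
Definition RU (U : {set A}) : rel F :=
  fun x y => adj x y && (phi x == phi y) && (phi x \in U).

Lemma cnt_fiber (H H' : sgraph) :
  (forall T : {set F}, hom (induced T) H = hom (induced T) H') ->
  cnt H (Rphi phi) = cnt H' (Rphi phi).
Proof.
move=> hT.
suff hs : forall s : seq A, cnt H (RU [set a in s]) = cnt H' (RU [set a in s]).
  have e : forall Y, cnt Y (Rphi phi) = cnt Y (RU [set a in enum A]).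
    by move=> Y; apply: cnt_ext => x y; rewrite /RU /Rphi inE mem_enum andbT.
  by rewrite !e hs.
elim=> [|a s IH].
  have e : forall Y, cnt Y (RU [set a in [::]]) = #|Y| ^ #|F|.
    move=> Y; rewrite -cnt_false; apply: cnt_ext => x y.
    by rewrite /RU inE andbF.
  rewrite !e; case: (posnP #|F|) => [->|hF]; first by rewrite !expn0.
  by rewrite (card_eq_of hT hF).
case: (boolP (a \in s)) => ha.
  have -> : [set x in a :: s] = [set x in s].
    by apply/setP => x; rewrite !inE; case: eqP => // ->.
  exact: IH.
set T := [set x | phi x == a].
have nocross : forall U, forall x y, RU U x y -> (x \in T) = (y \in T).
  by move=> U x y /andP[/andP[_ /eqP e] _]; rewrite !inE e.
have e1 : forall Y, cnt Y (RU [set x in a :: s]) =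
    hom (induced T) Y * cntsub (~: T) Y (RU [set x in s]).
  move=> Y; rewrite (@cnt_split _ T Y _ (nocross _)) hom_cntsub; congr (_ * _).
    apply: cntsub_ext => -[x hx] [y hy] /=; move: hx hy; rewrite !inE => /eqP hx /eqP hy.
    by rewrite /RU hx hy !inE eqxx !andbT.
  apply: (@cntsub_ext (~: T) Y (RU [set x in a :: s]) (RU [set x in s])) => -[x hx] [y hy] /=; move: hx; rewrite !inE => hx.
  by rewrite /RU !inE (negbTE hx).
have e2 : forall Y, cnt Y (RU [set x in s]) =
    #|Y| ^ #|ind_vert T| * cntsub (~: T) Y (RU [set x in s]).
  move=> Y; rewrite (@cnt_split _ T Y _ (nocross _)); congr (_ * _).
  apply: cntsub_false => -[x hx] [y hy] /=; move: hx; rewrite !inE => /eqP hx.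
  by rewrite /RU hx inE (negbTE ha) andbF.
move: IH; rewrite !e1 !e2 (hT T).
case: (posnP #|ind_vert T|) => [->|hm]; first by rewrite !expn0 !mul1n => ->.
have hF : 0 < #|F|.
  by case/card_gt0P: hm => -[x _] _; apply/card_gt0P; exists x.
rewrite (card_eq_of hT hF).
case: (posnP #|H'|) => [h0|hp].
  have : hom (induced T) H' = 0.
    by apply/eqP; rewrite -leqn0; apply: leq_trans (cntsub_le _ _ _) _; rewrite h0 exp0n.
  by move=> ->; rewrite !mul0n.
by move/eqP; rewrite eqn_pmul2l ?expn_gt0 ?hp // => /eqP ->.
Qed.
End Fiber.

Lemma lex_congr (F G H H' : sgraph) :
  (forall T : {set F}, hom (induced T) H = hom (induced T) H') ->
  hom F (lexprod G H) = hom F (lexprod G H').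
Proof.
move=> hT; rewrite !hom_lex; apply: eq_bigr => phi _.
by rewrite (cnt_fiber phi hT).
Qed.

From mathcomp Require Import zify.

Lemma hom_iso (K1 K2 Y : sgraph) : iso K1 K2 -> hom K1 Y = hom K2 Y.
Proof.
case=> f [[g fg gf] hf].
pose Phi (p : {ffun K2 -> Y}) : {ffun K1 -> Y} := [ffun x => p (f x)].
have inj : injective Phi.
  move=> p q /ffunP e; apply/ffunP => y; have := e (g y); by rewrite !ffunE gf.
rewrite /hom -(card_imset _ inj); apply: eq_card => p.
rewrite inE; apply/idP/imsetP.
  move=> /forallP hp; exists [ffun y => p (g y)].
    rewrite inE; apply/forallP => y1; apply/forallP => y2; apply/implyP => a.
    rewrite !ffunE; apply: (implyP (forallP (hp (g y1)) (g y2))).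
    by rewrite -hf !gf.
  by apply/ffunP => x; rewrite !ffunE fg.
case=> q; rewrite inE => /forallP hq ->.
apply/forallP => x1; apply/forallP => x2; apply/implyP => a; rewrite !ffunE.
by apply: (implyP (forallP (hq (f x1)) (f x2))); rewrite hf.
Qed.

Lemma hom_empty (F Y : sgraph) : #|F| = 0 -> hom F Y = 1.
Proof.
move=> h0; rewrite hom_cnt (@cnt_ext F Y _ (fun _ _ => false)) ?cnt_false ?h0 //.
move=> x y; exfalso; move: h0; have : 0 < #|F| by apply/card_gt0P; exists x.
by move=> /[swap] ->.
Qed.

Lemma hom_Y0 (F Y : sgraph) : 0 < #|F| -> #|Y| = 0 -> hom F Y = 0.
Proof.
move=> hF hY; apply/eqP; rewrite -leqn0; apply: leq_trans (cnt_le _ _) _.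
by rewrite hY exp0n.
Qed.

Lemma prod_equiv (C : sgraph -> Prop) (G H X : sgraph) :
  hom_equiv C G H -> hom_equiv C (gprod G X) (gprod H X).
Proof. by move=> e F hF; rewrite !hom_cnt !cnt_prod -!hom_cnt e. Qed.

Lemma sq_trick (I : finType) (g h : I -> nat) :
  \sum_i g i * g i = \sum_i h i * g i -> \sum_i g i * h i = \sum_i h i * h i ->
  forall i, g i = h i.
Proof.
move=> E1 E2.
have E : \sum_i (g i * h i + h i * g i) = \sum_i (g i * g i + h i * h i).
  by rewrite !big_split /= E1 E2 addnC.
have L : forall i, true -> g i * h i + h i * g i <= g i * g i + h i * h i ?=
    iff (g i == h i).
  move=> i _; have [A1 A2] := nat_AGM2 (g i) (h i).
  split; first by move: A1; rewrite expnS expn1; nia.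
  rewrite -A2; apply/eqP/eqP; rewrite expnS expn1; nia.
have := (leqif_sum L).2; rewrite E eqxx => /esym /forallP H i.
by move: (H i) => /= /eqP.
Qed.

Definition cmpl_adj (V : finType) : rel V := fun x y => x != y.
Lemma cmpl_sym V : symmetric (@cmpl_adj V).
Proof. by move=> x y; rewrite /cmpl_adj eq_sym. Qed.
Lemma cmpl_irr V : irreflexive (@cmpl_adj V).
Proof. by move=> x; rewrite /cmpl_adj eqxx. Qed.
Definition cmpl (V : finType) : sgraph := SGraph (@cmpl_sym V) (@cmpl_irr V).

Lemma valid_cmpl (F : sgraph) (phi : {ffun F -> cmpl F}) : validm phi.
Proof.
apply/forallP => x; apply/forallP => y; apply/implyP => _.
by rewrite /= /cmpl_adj; case: (phi x == phi y).
Qed.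

Lemma iso_refl (X : sgraph) : iso X X.
Proof. by exists id; split => //; exists id. Qed.

Lemma lex_to_cl (C : sgraph -> Prop) : lex_preserved C -> induced_closed (cl C).
Proof.
move=> hL K hK S K' hiso G H hGH.
rewrite !(hom_iso _ hiso).
have e : forall Y, hom K (lexprod (cmpl K) Y) =
    \sum_(phi : {ffun K -> cmpl K}) cnt Y (Rphi phi).
  by move=> Y; rewrite hom_lex; apply: eq_bigr => phi _; rewrite valid_cmpl mul1n.
have hX : forall X,
    \sum_(phi : {ffun K -> cmpl K}) cnt G (Rphi phi) * cnt X (Rphi phi) =
    \sum_(phi : {ffun K -> cmpl K}) cnt H (Rphi phi) * cnt X (Rphi phi).
  move=> X; have := hK _ _ (hL (cmpl K) _ _ (prod_equiv X hGH)).
  rewrite !e => E.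
  have e2 : forall Y, \sum_(phi : {ffun K -> cmpl K}) cnt (gprod Y X) (Rphi phi) =
      \sum_(phi : {ffun K -> cmpl K}) cnt Y (Rphi phi) * cnt X (Rphi phi).
    by move=> Y; apply: eq_bigr => phi _; rewrite cnt_prod.
  by rewrite -!e2.
have eqc := @sq_trick _ (fun phi => cnt G (Rphi phi)) (fun phi => cnt H (Rphi phi))
   (hX G) (hX H).
have cid : forall Y, cnt Y (Rphi ([ffun x => x] : {ffun K -> cmpl K})) = #|Y| ^ #|K|.
  move=> Y; rewrite -cnt_false; apply: cnt_ext => x y; rewrite /Rphi !ffunE.
  by case: eqP => [->|]; rewrite ?adj_irr ?andbF.
case: (posnP #|ind_vert S|) => [h0|hS]; first by rewrite !hom_empty.
case/card_gt0P: (hS) => -[s0 hs0] _.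
pose phiS : {ffun K -> cmpl K} := [ffun x => if x \in S then s0 else x].
pose RS : rel K := fun x y => adj x y && (x \in S) && (y \in S).
have eS : forall Y, cnt Y (Rphi phiS) = hom (induced S) Y * #|Y| ^ #|ind_vert (~: S)|.
  move=> Y; rewrite (@cnt_ext K Y _ RS); last first.
    move=> x y; rewrite /Rphi /RS !ffunE.
    case: (boolP (x \in S)) => hx; case: (boolP (y \in S)) => hy /=; rewrite ?eqxx ?andbT ?andbF //.
    - by case: (s0 =P y) => [e0|]; rewrite ?andbF //; move: hy; rewrite -e0 hs0.
    - by case: (x =P s0) => [e0|]; rewrite ?andbF //; move: hx; rewrite e0 hs0.
    - by case: (x =P y) => [->|]; rewrite ?adj_irr ?andbF.
  have nc : forall x y, RS x y -> (x \in S) = (y \in S).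
    by move=> x y /andP[/andP[_ ->] ->].
  rewrite (@cnt_split _ S Y _ nc) hom_cntsub; congr (_ * _).
    by apply: cntsub_ext => u v; rewrite /RS !(valP u) !(valP v) !andbT.
  apply: cntsub_false => -[x hx] [y hy] /=; move: hx; rewrite inE => hx.
  by rewrite /RS (negbTE hx) andbF.
have hk : 0 < #|K| by apply/card_gt0P; exists s0.
have cardGH : #|G| = #|H|.
  by move: (eqc [ffun x => x]); rewrite /= !cid => /eqP; rewrite eqn_exp2r // => /eqP.
case: (posnP #|H|) => [h0|hp]; first by rewrite !hom_Y0 // cardGH.
move: (eqc phiS); rewrite /= !eS cardGH => /eqP.
by rewrite eqn_pmul2r ?expn_gt0 ?hp // => /eqP.
Qed.

Theorem theorem14 (C : sgraph -> Prop) :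
  (induced_closed C -> lex_preserved C) /\
  (lex_preserved C <-> induced_closed (cl C)).
Proof.
split.
  move=> hC G H H' e F hF; apply: lex_congr => T; apply: e.
  exact: (hC F hF T (induced T) (iso_refl _)).
split; first exact: lex_to_cl.
move=> hcl G H H' e F hF; apply: lex_congr => T.
have hFcl : cl C F by move=> G1 H1 ee; exact: ee F hF.
exact: (hcl F hFcl T (induced T) (iso_refl _) H H' e).
Qed.
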